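(* Let $G$ be a connected graph with $V(G)=\{v_1,\dots,v_n\}$ and let $k_1,\dots,k_n$ be positive integers. If $S$ is a gp-set of $G$ that induces a complete subgraph of $G_{\rm SR}$, and $\min\{k_i:\ v_i\in S\}\ge \max\{k_i:\ v_i\notin S\}$, then $$\mathrm{gp}(G[K_{k_1},\dots,K_{k_n}])=\sum_{i:\,v_i\in S}k_i=\omega\big((G[K_{k_1},\dots,K_{k_n}])_{\rm SR}\big).$$
   Context: All graphs are finite and simple. For a graph $G$ with $V(G)=\{v_1,\dots,v_n\}$ and pairwise disjoint graphs $H_1,\dots,H_n$, the generalized lexicographic product $G[H_1,\dots,H_n]$ has vertex set $\bigcup_{i}\{(v_i,h): h\in V(H_i)\}$; $(v_i,h)$ and $(v_j,h')$ are adjacent iff either $v_iv_j\in E(G)$ (for arbitrary $h\in V(H_i)$, $h'\in V(H_j)$), or $i=j$ and $hh'\in E(H_i)$. That is, each $v_i$ is replaced by $H_i$ and each edge $v_iv_j$ by all edges between $H_i$ and $H_j$. For a connected graph $G$, a set $S\subseteq V(G)$ is a general position set if no three pairwise distinct vertices of $S$ lie on a common geodesic (shortest path); $\mathrm{gp}(G)$ is the maximum cardinality of a general position set, and a gp-set is a general position set of cardinality $\mathrm{gp}(G)$. A vertex $u$ is maximally distant from $v$ if every neighbor $w$ of $u$ satisfies $d_G(v,w)\le d_G(u,v)$; $u,v$ are mutually maximally distant (MMD) if each is maximally distant from the other. The strong resolving graph $G_{\rm SR}$ has vertex set $V(G)$, distinct vertices adjacent iff MMD in $G$. $\omega$ is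 the clique number. *)

(* Defs.v *)
From mathcomp Require Import all_boot.
Set Implicit Arguments. Unset Strict Implicit. Unset Printing Implicit Defensive.

Section Graphs.
Variable T : finType.
Variable e : rel T.

Definition walkb (x y : T) (n : nat) : bool :=
  [exists p : n.-tuple T, path e x p && (last x p == y)].

(* distance: least n < #|T| with a walk of length n from x to y
   (equals #|T| if there is none; irrelevant for connected graphs) *)
Definition dist (x y : T) : nat := find (walkb x y) (iota 0 #|T|).

(* u, v, w lie on a common geodesic: some path x :: p whose length
   equals the distance between its endpoints contains u, v and w.
   (A geodesic has length dist <= #|T|, so bounding m is no restriction.) *)
Definition on_common_geodesic (u v w : T) : bool :=
  [exists x : T, exists m : 'I_#|T|.+1, exists p : m.-tuple T,
     [&& path e x p, (m == dist x (last x p) :> nat),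
         u \in x :: p, v \in x :: p & w \in x :: p]].

Definition gen_pos (S : {set T}) : bool :=
  [forall u in S, forall v in S, forall w in S,
     [&& u != v, v != w & u != w] ==> ~~ on_common_geodesic u v w].

Definition gp : nat := \max_(S : {set T} | gen_pos S) #|S|.

Definition gp_set (S : {set T}) : bool := gen_pos S && (#|S| == gp).

Definition maximally_distant (u v : T) : bool :=
  [forall w, e u w ==> (dist v w <= dist u v)].

Definition MMD (u v : T) : bool := maximally_distant u v && maximally_distant v u.

Definition SR : rel T := fun u v => (u != v) && MMD u v.

End Graphs.

Definition clique (T : finType) (r : rel T) (S : {set T}) : bool :=
  [forall x in S, forall y in S, (x != y) ==> r x y].

Definition omega (T : finType) (r : rel T) : nat :=
  \max_(S : {set T} | clique r S) #|S|.

Definition simple_graph (T : finType) (e : rel T) : Prop :=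
  symmetric e /\ irreflexive e.

Definition connected_graph (T : finType) (e : rel T) : Prop :=
  forall x y : T, connect e x y.

(* generalized lexicographic product G[K_{k v} : v in T]:
   vertex (v, h) with h : 'I_(k v) a vertex of the complete graph K_{k v} *)
Definition lexK (T : finType) (e : rel T) (k : T -> nat) : rel {v : T & 'I_(k v)} :=
  fun a b => e (tag a) (tag b) || ((tag a == tag b) && (a != b)).
Arguments lexK {T} e k.

(* Main.v *)
Require Import Defs.
From mathcomp Require Import all_boot.
From mathcomp Require Import zify.
Set Implicit Arguments. Unset Strict Implicit. Unset Printing Implicit Defensive.

Section Walks.
Variable T : finType.
Variable e : rel T.

Definition fwalk (a b : T) (n : nat) : Prop :=
  exists f : nat -> T, [/\ f 0 = a, f n = b & forall i, i < n -> e (f i) (f i.+1)].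

Lemma fwalk0 a : fwalk a a 0.
Proof. by exists (fun _ => a); split. Qed.

Lemma fwalk1 a b : e a b -> fwalk a b 1.
Proof. move=> h; exists (fun i => if i is 0 then a else b); split=> // -[|i] //. Qed.

Lemma fwalk_cat a b c m n : fwalk a b m -> fwalk b c n -> fwalk a c (m + n).
Proof.
move=> [f [f0 fm hf]] [g [g0 gn hg]].
exists (fun i => if i <= m then f i else g (i - m)); split.
- by rewrite leq0n.
- case: ifP => h.
  + have n0 : n = 0 by lia.
    by rewrite n0 addn0 fm -gn n0 g0.
  + by rewrite addKn.
- move=> i hi /=; case: (ltngtP i m) => h.
  + by apply: hf.
  + have -> : i.+1 - m = (i - m).+1 by lia.
    apply: hg; lia.
  + subst i; rewrite ?leqnn ?ltnn fm -g0 subSnn; apply: hg; lia.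
Qed.

Lemma fwalk_sub f n i j : (forall t, t < n -> e (f t) (f t.+1)) ->
  i <= j -> j <= n -> fwalk (f i) (f j) (j - i).
Proof.
move=> hf hij hjn; exists (fun t => f (i + t)); split.
- by rewrite addn0.
- by rewrite subnKC.
- move=> t ht; rewrite addnS; apply: hf; lia.
Qed.

Lemma fwalk_connect a b n : fwalk a b n -> connect e a b.
Proof.
move=> [f [f0 fn hf]]; rewrite -f0 -fn.
suff: forall j, j <= n -> connect e (f 0) (f j) by apply.
elim=> [|j IH] hj; first exact: connect0.
exact: connect_trans (IH (ltnW hj)) (connect1 (hf j hj)).
Qed.

Lemma walkbP a b n : walkb e a b n <-> fwalk a b n.
Proof.
split.
- move=> /existsP [p /andP [hp /eqP hl]].
  exists (fun i => nth a (a :: p) i); split => //.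
  + by rewrite -hl (last_nth a) size_tuple.
  + move=> i hi; move/(pathP a): hp => hp; apply: hp; by rewrite size_tuple.
- move=> [f [f0 fn hf]].
  apply/existsP.
  exists (@Tuple n T (mkseq (fun i => f i.+1) n) (introT eqP (size_mkseq _ _))) => /=.
  apply/andP; split.
  + apply/(pathP a) => i; rewrite size_mkseq => hi; rewrite nth_mkseq //.
    case: i hi => [|i] hi /=; first by rewrite -f0; apply: hf.
    rewrite nth_mkseq; [apply: hf | ]; lia.
  + case: n fn hf => [|n] fn hf; first by rewrite /= -f0 fn eqxx.
    by rewrite -(nth_last a) size_mkseq (nth_mkseq a _ (ltnSn n)) fn.
Qed.

Section Sym.
Hypothesis esym : symmetric e.
Lemma fwalk_rev a b n : fwalk a b n -> fwalk b a n.
Proof.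
move=> [f [f0 fn hf]]; exists (fun t => f (n - t)); split.
- by rewrite subn0.
- by rewrite subnn.
- move=> t ht; rewrite esym.
  have -> : n - t = (n - t.+1).+1 by lia.
  apply: hf; lia.
Qed.
End Sym.

Section Conn.
Hypothesis econn : connected_graph e.

Lemma walk_small x y : exists n, n < #|T| /\ walkb e x y n.
Proof.
have /connectP [p hp ->] := econn x y.
case: (shortenP hp) => p' hp' hu _.
exists (size p'); split.
- have := max_card (mem (x :: p')); rewrite (card_uniqP hu) /=; lia.
- apply/existsP; exists (in_tuple p'); by rewrite hp' eqxx.
Qed.

Lemma dist_spec x y : walkb e x y (dist e x y) /\ dist e x y < #|T|.
Proof.
have [n [hn hw]] := walk_small x y.
have hhas : has (walkb e x y) (iota 0 #|T|).
  by apply/hasP; exists n => //; rewrite mem_iota; lia.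
have hlt := hhas; rewrite has_find size_iota in hlt.
split => //.
have := nth_find 0 hhas; rewrite nth_iota //.
Qed.

Lemma dist_le x y n : fwalk x y n -> dist e x y <= n.
Proof.
move/walkbP => hw.
have [_ hlt] := dist_spec x y.
case: (leqP #|T| n) => hn; first lia.
rewrite leqNgt; apply/negP => h.
have := before_find 0 h; rewrite /dist nth_iota ?add0n ?hw //.
Qed.

Lemma dist_fwalk x y : fwalk x y (dist e x y).
Proof. by apply/walkbP; case: (dist_spec x y). Qed.

Lemma dist_xx x : dist e x x = 0.
Proof. by apply/eqP; rewrite -leqn0; apply: dist_le; apply: fwalk0. Qed.

Lemma dist_0 x y : dist e x y = 0 -> x = y.
Proof. move=> h; have := dist_fwalk x y; rewrite h => -[f [f0 f1 _]]; by rewrite -f0. Qed.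

Lemma dist_edge x y : e x y -> dist e x y <= 1.
Proof. by move=> h; apply: dist_le; apply: fwalk1. Qed.

Hypothesis esym : symmetric e.

Lemma dist_sym x y : dist e x y = dist e y x.
Proof.
apply/eqP; rewrite eqn_leq; apply/andP; split; apply: dist_le; apply: fwalk_rev => //; apply: dist_fwalk.
Qed.

Lemma geo_dist f m : (forall t, t < m -> e (f t) (f t.+1)) -> dist e (f 0) (f m) = m ->
  forall i j, i <= j -> j <= m -> dist e (f i) (f j) = j - i.
Proof.
move=> hf hd i j hij hjm; apply/eqP; rewrite eqn_leq; apply/andP; split; first by apply: dist_le; exact: (fwalk_sub hf hij hjm).
rewrite leqNgt; apply/negP => hlt.
have w1 := fwalk_sub hf (leq0n i) (leq_trans hij hjm).
have w2 := dist_fwalk (f i) (f j).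
have w3 := fwalk_sub hf hjm (leqnn m).
have := dist_le (fwalk_cat (fwalk_cat w1 w2) w3); rewrite hd; lia.
Qed.

Lemma clique_MMD C x y : clique (SR e) C -> x \in C -> y \in C -> x != y -> MMD e x y.
Proof. by move=> /forall_inP /(_ x) hC hx hy hxy; move: (hC hx) => /forall_inP /(_ y hy) /implyP /(_ hxy) /andP []. Qed.

Lemma clique_SR_gen_pos C : clique (SR e) C -> gen_pos e C.
Proof.
move=> hC.
apply/forall_inP => u hu; apply/forall_inP => v hv; apply/forall_inP => w hw.
apply/implyP => /and3P [huv hvw huw]; apply/negP.
move=> /existsP [x /existsP [m /existsP [p /and5P [hp /eqP hm hux hvx hwx]]]].
pose f := nth x (x :: p).
have hf : forall t, t < m -> e (f t) (f t.+1).
  by move=> t ht; move/(pathP x): hp; apply; rewrite size_tuple.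
have hd : dist e (f 0) (f m) = m.
  have hl : nth x (x :: p) m = last x p by rewrite (last_nth x) size_tuple.
  by rewrite /f /= hl -hm.
have key : forall i j, i < j -> j < m -> ~~ maximally_distant e (f j) (f i).
  move=> i j hij hjm; apply/negP => /forallP /(_ (f j.+1)) /implyP /(_ (hf j hjm)).
  rewrite (dist_sym (f j)) (geo_dist hf hd (leqW (ltnW hij)) hjm) (geo_dist hf hd (ltnW hij) (ltnW hjm)) => hh; lia.
have hs : size (x :: p) = m.+1 by rewrite /= size_tuple.
have H3 : forall a b c, a \in C -> b \in C -> b != a -> a \in x :: p -> b \in x :: p ->
    c \in x :: p -> index a (x :: p) < index b (x :: p) -> index b (x :: p) < index c (x :: p) -> False.
  move=> a b c ha hb hba hax hbx hcx h1 h2.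
  have := key _ _ h1; rewrite /f !nth_index //.
  have hcm : index c (x :: p) < m.+1 by rewrite -hs index_mem.
  move=> /(_ (leq_trans h2 (hcm : _ <= m))).
  by have /andP [-> _] := clique_MMD hC hb ha hba.
have idx : forall a b, a \in x :: p -> a != b -> index a (x :: p) != index b (x :: p).
  move=> a b ha hab; apply: contra hab => /eqP h.
  by rewrite -(nth_index x ha) h nth_index // -index_mem -h index_mem.
have i1 := idx _ _ hux huv; have i2 := idx _ _ hvx hvw; have i3 := idx _ _ hux huw.
have hvu : v != u by rewrite eq_sym.
have hwv : w != v by rewrite eq_sym.
have hwu : w != u by rewrite eq_sym.
set s := x :: p in hux hvx hwx H3 idx i1 i2 i3.
case: (ltngtP (index u s) (index v s)) => h1; last by rewrite h1 eqxx in i1.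
- case: (ltngtP (index v s) (index w s)) => h2; last by rewrite h2 eqxx in i2.
  + exact: (H3 u v w hu hv hvu hux hvx hwx h1 h2).
  + case: (ltngtP (index u s) (index w s)) => h3; last by rewrite h3 eqxx in i3.
    * exact: (H3 u w v hu hw hwu hux hwx hvx h3 h2).
    * exact: (H3 w u v hw hu huw hwx hux hvx h3 h1).
- case: (ltngtP (index v s) (index w s)) => h2; last by rewrite h2 eqxx in i2.
  + case: (ltngtP (index u s) (index w s)) => h3; last by rewrite h3 eqxx in i3.
    * exact: (H3 v u w hv hu huv hvx hux hwx h1 h3).
    * exact: (H3 v w u hv hw hwv hvx hwx hux h2 h3).
  + exact: (H3 w v u hw hv hvw hwx hvx hux h2 h1).
Qed.

End Conn.
End Walks.


Lemma card_tagset (T : finType) (k : T -> nat) (A : {set T}) :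
  #|[set a : {v : T & 'I_(k v)} | tag a \in A]| = \sum_(i in A) k i.
Proof.
rewrite -sum1_card.
rewrite (eq_bigl (fun a : {v : T & 'I_(k v)} => (tag a \in A) && predT (tagged a))); last first.
  by move=> a; rewrite inE andbT.
rewrite -(sig_big_dep (fun i => i \in A) (fun i => predT) (fun i j => 1)).
by apply: eq_bigr => i _; rewrite sum1_card card_ord.
Qed.

Lemma sum_exchange (T : finType) (k : T -> nat) (P S : {set T}) :
  #|P| <= #|S| -> (forall i j, i \in S -> j \notin S -> k j <= k i) ->
  \sum_(i in P) k i <= \sum_(i in S) k i.
Proof.
move=> hc hk.
rewrite (big_setID S) [X in _ <= X](big_setID P) /= setIC leq_add2l.
pose c := \max_(j in P :\: S) k j.
have h1 : \sum_(j in P :\: S) k j <= #|P :\: S| * c.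
  rewrite -sum_nat_const; apply: leq_sum => j hj; exact: leq_bigmax_cond.
have h2 : #|S :\: P| * c <= \sum_(i in S :\: P) k i.
  rewrite -sum_nat_const; apply: leq_sum => i; rewrite inE => /andP [_ hi].
  apply/bigmax_leqP => j; rewrite inE => /andP [hj _]; exact: hk.
have h3 : #|P :\: S| <= #|S :\: P|.
  have := cardsID S P; have := cardsID P S; rewrite setIC; lia.
apply: leq_trans h1 (leq_trans _ h2); exact: leq_mul h3 (leqnn c).
Qed.

Section Lex.
Variable T : finType.
Variable e : rel T.
Variable k : T -> nat.
Hypothesis esym : symmetric e.
Hypothesis eirr : irreflexive e.
Hypothesis econn : connected_graph e.
Hypothesis kpos : forall v, 0 < k v.

Local Notation V := {v : T & 'I_(k v)}.
Local Notation H := (lexK e k).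

Definition lift0 (v : T) : V := Tagged (fun v => 'I_(k v)) (Ordinal (kpos v)).

Lemma lexK_sym : symmetric H.
Proof. by move=> a b; rewrite /lexK esym (eq_sym (tag a)) (eq_sym a). Qed.

Lemma lexK_irr : irreflexive H.
Proof. move=> a; rewrite /lexK. rewrite eirr. rewrite !eqxx. by []. Qed.

Lemma lift_walk a b d : 0 < d -> fwalk e (tag a) (tag b) d -> fwalk H a b d.
Proof.
move=> hd [g [g0 gd hg]].
pose F i := if i == 0 then a else if i == d then b else lift0 (g i).
have htag : forall i, i <= d -> tag (F i) = g i.
  move=> i hi; rewrite /F; case: eqP => [->|_]; first by rewrite g0.
  by case: eqP => [->|_].
exists F; split.
- by rewrite /F eqxx.
- by rewrite /F eqxx; case: eqP => // h; rewrite h in hd.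
- move=> i hi; rewrite /lexK (htag i) ?(htag i.+1) ?hg //; lia.
Qed.

Lemma proj_walk a b n : fwalk H a b n -> exists m, m <= n /\ fwalk e (tag a) (tag b) m.
Proof.
move=> [f [f0 fn hf]].
suff: forall j, j <= n -> exists m, m <= j /\ fwalk e (tag a) (tag (f j)) m.
  by move/(_ n (leqnn n)); rewrite fn.
elim=> [|j IH] hj; first by exists 0; rewrite f0; split => //; apply: fwalk0.
have [m [hm w]] := IH (ltnW hj).
have := hf j hj; rewrite /lexK => /orP [he | /andP [/eqP ht _]].
- exists m.+1; split; first lia.
  by have := fwalk_cat w (fwalk1 he); rewrite addn1.
- exists m; split; first lia.
  by rewrite -ht.
Qed.

Lemma Hconn : connected_graph H.
Proof.
move=> a b; case: (eqVneq (tag a) (tag b)) => ht.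
- case: (eqVneq a b) => [->|hab]; first exact: connect0.
  by apply: connect1; rewrite /lexK ht eqxx hab orbT.
- apply: (fwalk_connect (n := dist e (tag a) (tag b))).
  apply: lift_walk; last exact: dist_fwalk.
  rewrite lt0n; apply/eqP => /(dist_0 econn) h; by rewrite h eqxx in ht.
Qed.

Lemma distH_diff a b : tag a != tag b -> dist H a b = dist e (tag a) (tag b).
Proof.
move=> ht; apply/eqP; rewrite eqn_leq; apply/andP; split.
- apply: (dist_le Hconn); apply: lift_walk; last exact: dist_fwalk.
  rewrite lt0n; apply/eqP => /(dist_0 econn) h; by rewrite h eqxx in ht.
- have [m [hm w]] := proj_walk (dist_fwalk Hconn a b).
  exact: leq_trans (dist_le econn w) hm.
Qed.

Lemma distH_same a b : tag a = tag b -> dist H a b <= 1.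
Proof.
move=> ht; case: (eqVneq a b) => [->|hab]; first by rewrite (dist_xx Hconn).
by apply: (dist_edge Hconn); rewrite /lexK ht eqxx hab orbT.
Qed.

Lemma md_same a b : tag a = tag b -> a != b -> maximally_distant H a b.
Proof.
move=> ht hab; apply/forallP => w; apply/implyP.
have d1 : 0 < dist H a b.
  by rewrite lt0n; apply/eqP => /(dist_0 Hconn) h; rewrite h eqxx in hab.
rewrite /lexK => /orP [he | /andP [/eqP hw _]].
- have hbw : tag b != tag w.
    by apply/eqP => h; rewrite ht h eirr in he.
  rewrite (distH_diff hbw) -ht; exact: leq_trans (dist_edge econn he) d1.
- have hbw : tag b = tag w by rewrite -ht hw.
  exact: leq_trans (distH_same hbw) d1.
Qed.

Lemma md_diff a b : tag a != tag b -> maximally_distant e (tag a) (tag b) ->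
  maximally_distant H a b.
Proof.
move=> hne hmd; apply/forallP => w; apply/implyP.
rewrite (distH_diff hne) /lexK => /orP [he | /andP [/eqP hw _]].
- have d1 : 0 < dist e (tag a) (tag b).
    by rewrite lt0n; apply/eqP => /(dist_0 econn) h; rewrite h eqxx in hne.
  case: (eqVneq (tag b) (tag w)) => hbw.
  + exact: leq_trans (distH_same hbw) d1.
  + rewrite distH_diff //.
    by move/forallP: hmd => /(_ (tag w)) /implyP /(_ he).
- have hbw : tag b != tag w by rewrite -hw eq_sym.
  by rewrite (distH_diff hbw) -hw (dist_sym econn esym).
Qed.


Lemma card_TV : #|T| <= #|{: V}|.
Proof. by apply: (leq_card lift0) => x y /(congr1 tag). Qed.

Lemma proj_gen_pos X : gen_pos H X -> gen_pos e (tag @: X).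
Proof.
move=> hX.
apply/forall_inP => u /imsetP [a ha ->]; apply/forall_inP => v /imsetP [b hb ->].
apply/forall_inP => w /imsetP [c hc ->].
apply/implyP => /and3P [h1 h2 h3]; apply/negP.
move=> /existsP [x /existsP [m /existsP [p /and5P [hp /eqP hm hu hv hw]]]].
have hab : a != b by apply: contraNneq h1 => ->.
have hbc : b != c by apply: contraNneq h2 => ->.
have hac : a != c by apply: contraNneq h3 => ->.
move/forall_inP: hX => /(_ a ha) /forall_inP /(_ b hb) /forall_inP /(_ c hc) /implyP.
rewrite hab hbc hac => /(_ isT) /negP; apply.
pose L t := if t == tag a then a else if t == tag b then b
            else if t == tag c then c else lift0 t.
have hL : forall t, tag (L t) = t.
  move=> t; rewrite /L; case: eqP => [->//|_]; case: eqP => [->//|_].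
  by case: eqP => [->//|_].
have La : L (tag a) = a by rewrite /L eqxx.
have Lb : L (tag b) = b by rewrite /L eq_sym (negbTE h1) eqxx.
have Lc : L (tag c) = c.
  by rewrite /L eqxx eq_sym (negbTE h3) eq_sym (negbTE h2).
have hmV : m < #|{: V}|.+1 by apply: leq_trans (ltn_ord m) _; rewrite ltnS card_TV.
apply/existsP; exists (L x); apply/existsP; exists (Ordinal hmV).
apply/existsP; exists (map_tuple L p); apply/and5P; split => /=.
- rewrite path_map; apply: sub_path hp => s t hst; by rewrite /= /lexK !hL hst.
- rewrite last_map; case: (eqVneq x (last x p)) => hx.
  + have h0 : dist e x (last x p) = 0 by rewrite -hx (dist_xx econn).
    have hm0 : (m : nat) = 0 by rewrite hm h0.
    by rewrite -hx (dist_xx Hconn) hm0.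
  + by rewrite distH_diff !hL // -hm.
- by rewrite -La (map_f L hu).
- by rewrite -Lb (map_f L hv).
- by rewrite -Lc (map_f L hw).
Qed.

Lemma clique_Sp S : clique (SR e) S -> clique (SR H) [set a : V | tag a \in S].
Proof.
move=> hS; apply/forall_inP => a; rewrite inE => ha; apply/forall_inP => b; rewrite inE => hb.
apply/implyP => hab; rewrite /SR hab /MMD /=.
case: (eqVneq (tag a) (tag b)) => ht.
- by rewrite md_same // md_same // eq_sym.
- have /andP [m1 m2] := clique_MMD hS ha hb ht.
  by rewrite md_diff // md_diff // eq_sym.
Qed.

End Lex.

Unset Implicit Arguments.

Theorem theorem5p1 (T : finType) (e : rel T) (k : T -> nat) (S : {set T}) :
  simple_graph e -> connected_graph e ->
  (forall v, 0 < k v) ->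
  gp_set e S ->
  clique (SR e) S ->
  (forall i j, i \in S -> j \notin S -> k j <= k i) ->
  gp (lexK e k) = \sum_(i in S) k i /\
  \sum_(i in S) k i = omega (SR (lexK e k)).
Proof.
move=> [esym eirr] econn kpos /andP [_ /eqP hS] hcl hk.
have HC := Hconn econn kpos.
have HS := lexK_sym (k:=k) esym.
have h1 : \sum_(i in S) k i <= omega (SR (lexK e k)).
  rewrite -card_tagset /omega.
  apply: (@leq_bigmax_cond _ (fun C => clique (SR (lexK e k)) C) (fun C => #|C|)); exact: (clique_Sp esym eirr econn kpos).
have h2 : omega (SR (lexK e k)) <= gp (lexK e k).
  apply/bigmax_leqP => C hC.
  apply: (@leq_bigmax_cond _ (fun C => gen_pos (lexK e k) C) (fun C => #|C|)); exact: (clique_SR_gen_pos HC HS).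
have h3 : gp (lexK e k) <= \sum_(i in S) k i.
  apply/bigmax_leqP => X hX.
  have hP := proj_gen_pos econn kpos hX.
  have hcP : #|tag @: X| <= #|S|.
    rewrite hS; exact: (@leq_bigmax_cond _ (fun C => gen_pos e C) (fun C => #|C|)).
  apply: leq_trans (sum_exchange hcP hk).
  rewrite -card_tagset; apply: subset_leq_card.
  apply/subsetP => a ha; rewrite inE; exact: imset_f.
split; lia.
Qed.
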